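(* $URD(12;K_2,S(C_3))\supseteq J(12)=\{(3,4),(7,2),(11,0)\}$; that is, for each $(r,s)\in\{(3,4),(7,2),(11,0)\}$ there exists a partition of the edge set of $K_{12}$ into $r$ 1-factors and $s$ classes each consisting of two vertex-disjoint 3-suns covering all twelve vertices.
   Context: A 3-sun is the graph on $6$ distinct vertices $a_1,a_2,a_3,b_1,b_2,b_3$ consisting of the triangle $(a_1,a_2,a_3)$ together with the edges $\{a_i,b_i\}$, $i=1,2,3$. $URD(v;K_2,S(C_3))$ denotes the set of pairs $(r,s)$ such that the edge set of $K_v$ can be partitioned into $r$ 1-factors and $s$ classes each of which is a set of vertex-disjoint 3-suns covering every vertex exactly once. *)

(* Defs.v *)
From mathcomp Require Import all_boot.
Set Implicit Arguments. Unset Strict Implicit. Unset Printing Implicit Defensive.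

(* Vertices of K_v are 'I_v; an edge is a 2-element subset of 'I_v. *)
Definition is_edge v (e : {set 'I_v}) : bool := #|e| == 2.

Definition one_factor v (F : {set {set 'I_v}}) : Prop :=
  (forall e, e \in F -> is_edge e) /\
  (forall x : 'I_v, #|[set e in F | x \in e]| = 1).

Definition sun_vertices v (a1 a2 a3 b1 b2 b3 : 'I_v) : {set 'I_v} :=
  [set a1; a2; a3; b1; b2; b3].
Definition sun_edges v (a1 a2 a3 b1 b2 b3 : 'I_v) : {set {set 'I_v}} :=
  [set [set a1; a2]; [set a2; a3]; [set a1; a3];
       [set a1; b1]; [set a2; b2]; [set a3; b3]].

Definition is_sun v (S : {set 'I_v} * {set {set 'I_v}}) : Prop :=
  exists a1 a2 a3 b1 b2 b3 : 'I_v,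
    uniq [:: a1; a2; a3; b1; b2; b3] /\
    S = (sun_vertices a1 a2 a3 b1 b2 b3, sun_edges a1 a2 a3 b1 b2 b3).

Definition sun_class v (C : {set {set 'I_v}}) : Prop :=
  exists suns : seq ({set 'I_v} * {set {set 'I_v}}),
    (forall S, S \in suns -> is_sun S) /\
    (forall x : 'I_v, count (fun S : {set 'I_v} * {set {set 'I_v}} => x \in S.1) suns = 1) /\
    C = \bigcup_(S <- suns) S.2.

Definition URD v (r s : nat) : Prop :=
  exists (Fs Cs : seq {set {set 'I_v}}),
    size Fs = r /\ size Cs = s /\
    (forall F, F \in Fs -> one_factor F) /\
    (forall C, C \in Cs -> sun_class C) /\
    (forall e : {set 'I_v}, is_edge e ->
       count (fun K : {set {set 'I_v}} => e \in K) (Fs ++ Cs) = 1) /\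
    (forall K e, K \in Fs ++ Cs -> e \in K -> is_edge e).

(* Main.v *)
Require Import Defs.
From mathcomp Require Import all_boot.
Set Implicit Arguments. Unset Strict Implicit. Unset Printing Implicit Defensive.

Lemma set2_eq v (x y a b : 'I_v) : x != y ->
  ([set x; y] == [set a; b]) = ((x == a) && (y == b)) || ((x == b) && (y == a)).
Proof.
move=> xy; apply/eqP/idP.
  move=> H.
  have : x \in [set a; b] by rewrite -H !inE eqxx.
  have : y \in [set a; b] by rewrite -H !inE eqxx orbT.
  rewrite !inE => /orP[/eqP ya|/eqP yb] /orP[/eqP xa|/eqP xb]; subst.
  - by rewrite eqxx in xy.
  - by rewrite !eqxx orbT.
  - by rewrite !eqxx.
  - by rewrite eqxx in xy.
by case/orP=> /andP[/eqP-> /eqP->] //; rewrite setUC.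
Qed.

Lemma in_bigcup_seq v (T : Type) (r : seq T) (F : T -> {set {set 'I_v}}) e :
  (e \in \bigcup_(i <- r) F i) = has (fun i => e \in F i) r.
Proof. by elim: r => [|h t IH]; rewrite ?big_nil ?big_cons ?inE //= IH. Qed.

Definition mp v (x y : 'I_v) (p : 'I_v * 'I_v) :=
  ((x == p.1) && (y == p.2)) || ((x == p.2) && (y == p.1)).

Lemma memsun v (x y a1 a2 a3 b1 b2 b3 : 'I_v) : x != y ->
  ([set x; y] \in sun_edges a1 a2 a3 b1 b2 b3) =
  has (mp x y) [:: (a1,a2); (a2,a3); (a1,a3); (a1,b1); (a2,b2); (a3,b3)].
Proof. move=> xy; rewrite /sun_edges !inE !set2_eq //= /mp /= -!orbA orbF. done. Qed.

Lemma memsv v (x a1 a2 a3 b1 b2 b3 : 'I_v) :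
  (x \in sun_vertices a1 a2 a3 b1 b2 b3) = (x \in [:: a1; a2; a3; b1; b2; b3]).
Proof. by rewrite /sun_vertices !inE /= -!orbA. Qed.

Lemma sun_edge_is_edge v (a1 a2 a3 b1 b2 b3 : 'I_v) e :
  uniq [:: a1; a2; a3; b1; b2; b3] -> e \in sun_edges a1 a2 a3 b1 b2 b3 -> is_edge e.
Proof.
move=> U; rewrite /sun_edges !inE.
move: U; rewrite /= !inE !negb_or.
case/andP=> /and5P[n12 n13 n14 n15 n16].
case/andP=> /and4P[n23 n24 n25 n26].
case/andP=> /and3P[n34 n35 n36] _.
by rewrite -!orbA /is_edge => /or4P[|||/or3P[||]] /eqP->; rewrite cards2 ?n12 ?n23 ?n13 ?n14 ?n25 ?n36.
Qed.

Definition oi (n : nat) : 'I_12 := Ordinal (ltn_pmod n (isT : 0 < 12)).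
Definition mkE (p : nat * nat) : {set 'I_12} := [set oi p.1; oi p.2].
Definition mkF (l : seq (nat * nat)) : {set {set 'I_12}} := \bigcup_(p <- l) [set mkE p].
Definition sunlist (s : seq nat) : seq 'I_12 :=
  [:: oi (nth 0 s 0); oi (nth 0 s 1); oi (nth 0 s 2); oi (nth 0 s 3); oi (nth 0 s 4); oi (nth 0 s 5)].
Definition mksun (s : seq nat) : {set 'I_12} * {set {set 'I_12}} :=
  let a i := oi (nth 0 s i) in
  (sun_vertices (a 0) (a 1) (a 2) (a 3) (a 4) (a 5), sun_edges (a 0) (a 1) (a 2) (a 3) (a 4) (a 5)).
Definition sun_pairs (s : seq nat) :=
  let a i := oi (nth 0 s i) in
  [:: (a 0, a 1); (a 1, a 2); (a 0, a 2); (a 0, a 3); (a 1, a 4); (a 2, a 5)].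
Definition mkC (c : seq (seq nat)) := \bigcup_(S <- map mksun c) S.2.

Definition cntF x y (fs : seq (seq (nat * nat))) :=
  count (fun l => has (fun p => mp x y (oi p.1, oi p.2)) l) fs.
Definition cntC x y (cs : seq (seq (seq nat))) :=
  count (fun c => has (fun s => has (mp x y) (sun_pairs s)) c) cs.

Definition checkE fs cs := all (fun n => all (fun m => (oi n != oi m) ==>
   (cntF (oi n) (oi m) fs + cntC (oi n) (oi m) cs == 1)) (iota 0 12)) (iota 0 12).
Definition checkF (l : seq (nat * nat)) :=
  all (fun p => oi p.1 != oi p.2) l &&
  all (fun n => size (filter (fun p => (oi n == oi p.1) || (oi n == oi p.2)) l) == 1) (iota 0 12).
Definition checkC (c : seq (seq nat)) :=
  all (fun s => uniq (sunlist s)) c &&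
  all (fun n => count (fun s => oi n \in sunlist s) c == 1) (iota 0 12).
Definition good fs cs := [&& checkE fs cs, all checkF fs & all checkC cs].

Lemma all12 (P : 'I_12 -> bool) : all (fun n => P (oi n)) (iota 0 12) -> forall x, P x.
Proof.
move=> /allP H x; have E : oi (val x) = x by apply: val_inj; rewrite /= modn_small.
by rewrite -E; apply: H; rewrite mem_iota /= ltn_ord.
Qed.

Lemma memE x (p : nat * nat) : (x \in mkE p) = (x == oi p.1) || (x == oi p.2).
Proof. by rewrite !inE. Qed.

Lemma oneF l : checkF l -> one_factor (mkF l).
Proof.
case/andP=> /allP Hd Hc; split.
  move=> e; rewrite in_bigcup_seq => /hasP[p pl]; rewrite inE => /eqP->.
  by rewrite /is_edge cards2 Hd.
move=> x; have := @all12 (fun x => size (filter (fun p => (x == oi p.1) || (x == oi p.2)) l) == 1) Hc x.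
case E: filter => [|p0 [|]] //= _.
have Hp0 : p0 \in filter (fun p => (x == oi p.1) || (x == oi p.2)) l by rewrite E inE.
move: (Hp0); rewrite mem_filter => /andP[xp0 p0l].
suff ->: [set e in mkF l | x \in e] = [set mkE p0] by rewrite cards1.
apply/setP => e; rewrite !inE in_bigcup_seq.
apply/andP/eqP.
  case=> /hasP[p pl]; rewrite inE => /eqP -> xe.
  have : p \in filter (fun p => (x == oi p.1) || (x == oi p.2)) l.
    by rewrite mem_filter -memE xe pl.
  by rewrite E inE => /eqP->.
move->; split; last by rewrite memE.
by apply/hasP; exists p0 => //; rewrite inE.
Qed.

Lemma sunC c : checkC c -> sun_class (mkC c).
Proof.
case/andP=> /allP Hu Hc; exists (map mksun c); split; last split.
- move=> S /mapP[s sc ->]; exists (oi (nth 0 s 0)), (oi (nth 0 s 1)), (oi (nth 0 s 2)),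
    (oi (nth 0 s 3)), (oi (nth 0 s 4)), (oi (nth 0 s 5)); split => //.
  exact: Hu.
- move=> x; rewrite count_map; apply/eqP; have := @all12 (fun x => count (fun s => x \in sunlist s) c == 1) Hc x.
  by congr (_ == _); apply: eq_count => s /=; rewrite memsv.
- by [].
Qed.

Lemma URD_of fs cs : good fs cs -> URD 12 (size fs) (size cs).
Proof.
case/and3P=> HE /allP HF /allP HC.
exists (map mkF fs), (map mkC cs); split; first by rewrite size_map.
split; first by rewrite size_map.
split; first by move=> F /mapP[l lf ->]; apply: oneF; apply: HF.
split; first by move=> C /mapP[c cc ->]; apply: sunC; apply: HC.
split.
  move=> e /cards2P[x [y [xy ->]]].
  have := @all12 (fun x => all (fun m => (x != oi m) ==>
     (cntF x (oi m) fs + cntC x (oi m) cs == 1)) (iota 0 12)) HE x.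
  move/(@all12 (fun y => (x != y) ==> (cntF x y fs + cntC x y cs == 1)))/(_ y).
  rewrite xy /= => /eqP H; apply: (etrans _ H).
  rewrite count_cat !count_map; congr (_ + _); apply: eq_count => l /=.
    by rewrite in_bigcup_seq; apply: eq_has => p /=; rewrite inE set2_eq.
  rewrite /mkC in_bigcup_seq has_map; apply: eq_has => s /=.
  by rewrite memsun.
move=> K e; rewrite mem_cat => /orP[] /mapP[d dd ->].
  rewrite in_bigcup_seq => /hasP[p pl]; rewrite inE => /eqP->.
  by have /andP[/allP Hd _] := HF d dd; rewrite /is_edge cards2 Hd.
rewrite in_bigcup_seq => /hasP[S /mapP[s sd ->]] /=.
apply: sun_edge_is_edge.
by have /andP[/allP Hu _] := HC d dd; apply: Hu.
Qed.

Definition fs_7_2 : seq (seq (nat*nat)) := [:: [:: (0, 8); (1, 6); (2, 10); (3, 9); (4, 11); (5, 7)]; [:: (0, 6); (1, 3); (2, 8); (4, 10); (5, 9); (7, 11)]; [:: (0, 7); (1, 4); (2, 5); (3, 10); (6, 11); (8, 9)]; [:: (0, 4); (1, 2); (3, 11); (5, 8); (6, 10); (7, 9)]; [:: (0, 9); (1, 11); (2, 6); (3, 5); (4, 8); (7, 10)]; [:: (0, 3); (1, 7); (2, 9); (4, 6); (5, 10); (8, 11)]; [:: (0, 10); (1, 8); (2, 11); (3, 7); (4, 9); (5, 6)]].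
Definition cs_7_2 : seq (seq (seq nat)) := [:: [:: [:: 0; 5; 11; 2; 1; 9]; [:: 6; 7; 8; 3; 4; 10]]; [:: [:: 1; 10; 9; 0; 11; 6]; [:: 4; 2; 3; 5; 7; 8]]].
Lemma urd_7_2 : URD 12 7 2.
Proof. apply: (@URD_of fs_7_2 cs_7_2); vm_compute; reflexivity. Qed.

Definition fs_3_4 : seq (seq (nat*nat)) := [:: [:: (0, 3); (1, 2); (4, 8); (5, 10); (6, 11); (7, 9)]; [:: (0, 10); (1, 4); (2, 7); (3, 11); (5, 6); (8, 9)]; [:: (0, 7); (1, 11); (2, 3); (4, 6); (5, 8); (9, 10)]].
Definition cs_3_4 : seq (seq (seq nat)) := [:: [:: [:: 9; 5; 11; 0; 2; 4]; [:: 6; 7; 3; 1; 10; 8]]; [:: [:: 11; 0; 8; 7; 1; 2]; [:: 9; 4; 3; 6; 10; 5]]; [:: [:: 8; 10; 1; 6; 3; 9]; [:: 4; 0; 2; 7; 5; 11]]; [:: [:: 10; 2; 6; 11; 9; 0]; [:: 7; 5; 1; 8; 4; 3]]].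
Lemma urd_3_4 : URD 12 3 4.
Proof. apply: (@URD_of fs_3_4 cs_3_4); vm_compute; reflexivity. Qed.

Definition fs_11_0 : seq (seq (nat*nat)) := [:: [:: (0, 7); (1, 10); (2, 11); (3, 5); (4, 9); (6, 8)]; [:: (0, 9); (1, 8); (2, 5); (3, 11); (4, 6); (7, 10)]; [:: (0, 2); (1, 9); (3, 8); (4, 5); (6, 10); (7, 11)]; [:: (0, 3); (1, 6); (2, 4); (5, 7); (8, 10); (9, 11)]; [:: (0, 11); (1, 7); (2, 3); (4, 8); (5, 6); (9, 10)]; [:: (0, 6); (1, 5); (2, 7); (3, 10); (4, 11); (8, 9)]; [:: (0, 5); (1, 4); (2, 9); (3, 6); (7, 8); (10, 11)]; [:: (0, 1); (2, 6); (3, 4); (5, 10); (7, 9); (8, 11)]; [:: (0, 8); (1, 2); (3, 9); (4, 10); (5, 11); (6, 7)]; [:: (0, 10); (1, 3); (2, 8); (4, 7); (5, 9); (6, 11)]; [:: (0, 4); (1, 11); (2, 10); (3, 7); (5, 8); (6, 9)]].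
Definition cs_11_0 : seq (seq (seq nat)) := [:: ].
Lemma urd_11_0 : URD 12 11 0.
Proof. apply: (@URD_of fs_11_0 cs_11_0); vm_compute; reflexivity. Qed.

Theorem lemma3p2 : URD 12 3 4 /\ URD 12 7 2 /\ URD 12 11 0.
Proof. by split; [exact: urd_3_4 | split; [exact: urd_7_2 | exact: urd_11_0]]. Qed.
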